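(* Let $k=\mathbb{F}_q$, $(Q,W)$ a QP with a cut $C$, $\alpha\in\mathbb{Z}_{\ge0}^{Q_0}$ and $\mu$ a slope function such that $(\alpha,\mu)$ is numb to $C$. Then $$|\varphi_\omega(\mathrm{Rep}^\mu_\alpha(Q))|=q^{\langle\alpha,\alpha\rangle_C}\,|\mathrm{Rep}^\mu_\alpha(J(Q,W;C))|,$$ and consequently $$\frac{|\varphi_\omega(\mathrm{Rep}^\mu_\alpha(Q))|_{\mathrm{vir}}}{|\mathrm{GL}_\alpha|_{\mathrm{vir}}}=q^{\frac12\langle\alpha,\alpha\rangle_{J_C}}\frac{|\mathrm{Rep}^\mu_\alpha(J(Q,W;C))|}{|\mathrm{GL}_\alpha|}.$$
   Context: $Q$ finite quiver, $W$ a potential, $\omega:\mathrm{Rep}_\alpha(Q)\to k$, $M\mapsto\operatorname{tr}W(M)$. A cut is $C\subset Q_1$ with $W$ homogeneous of degree $1$ when arrows of $C$ have degree $1$ and others degree $0$; $Q_C=(Q_0,Q_1\setminus C)$ and $J(Q,W;C)=\widehat{kQ_C}/\langle\partial_cW:c\in C\rangle$ ($\partial_c$ cyclic derivative). A slope function is $\mu=\sigma/\theta$ with $\sigma,\theta$ integral linear forms on $\mathbb{Z}^{Q_0}$ and $\theta(\gamma)>0$ for $\gamma\ne0$; $M$ is $\mu$-semistable if $\mu(\underline{\dim}L)\le\mu(\underline{\dim}M)$ for all nonzero subrepresentations $L$. $\mathrm{Rep}^\mu_\alpha(-)$ denotes the $\mu$-semistable locus. $(\alpha,\mu)$ is numb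 to $C$ if the vector bundle (forgetting arrows in $C$) $\pi:\mathrm{Rep}_\alpha(Q)\to\mathrm{Rep}_\alpha(Q_C)$ restricts to a bundle $\mathrm{Rep}^\mu_\alpha(Q)\to\mathrm{Rep}^\mu_\alpha(Q_C)$, i.e. $\mathrm{Rep}^\mu_\alpha(Q)=\pi^{-1}(\mathrm{Rep}^\mu_\alpha(Q_C))$. $|\varphi_\omega(X)|=|\omega^{-1}(0)|-|\omega^{-1}(1)|$ (numbers of $\mathbb{F}_q$-points), $|X|_{\mathrm{vir}}$-type quantities: $|\varphi_\omega(X)|_{\mathrm{vir}}=q^{-\dim X/2}|\varphi_\omega(X)|$, $|\mathrm{GL}_\alpha|_{\mathrm{vir}}=q^{-\dim\mathrm{GL}_\alpha/2}|\mathrm{GL}_\alpha(\mathbb{F}_q)|$, $\mathrm{GL}_\alpha=\prod_i\mathrm{GL}_{\alpha_i}$. $\langle\alpha,\beta\rangle_Q=\sum_i\alpha_i\beta_i-\sum_{a\in Q_1}\alpha_{ta}\beta_{ha}$, $\langle\alpha,\beta\rangle_C=\sum_{c\in C}\alpha_{tc}\beta_{hc}$, $\langle\alpha,\beta\rangle_{J_C}=\langle\alpha,\beta\rangle_Q+\langle\alpha,\beta\rangle_C+\langle\beta,\alpha\rangle_C$. *)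

(* Defs.v *)
From HB Require Import structures.
From mathcomp Require Import all_boot all_order all_algebra.
Set Implicit Arguments. Unset Strict Implicit. Unset Printing Implicit Defensive.
Import Order.TTheory GRing.Theory Num.Theory.
Local Open Scope ring_scope.

Record quiver := Quiver { Q0 : finType; Q1 : finType; tl : Q1 -> Q0; hd : Q1 -> Q0 }.

Definition cutQ (Q : quiver) (C : {set Q1 Q}) : quiver :=
  @Quiver (Q0 Q) {a : Q1 Q | a \notin C} (fun a => tl (val a)) (fun a => hd (val a)).

Section Reps.
Variable F : finFieldType.
Variable Q : quiver.
Variable alpha : Q0 Q -> nat.

(* Rep_alpha(Q): a matrix M_a : k^{alpha(ta)} -> k^{alpha(ha)} per arrow
   (row-vector convention: v |-> v *m M_a). *)
Definition rep := {dffun forall a : Q1 Q, 'M[F]_(alpha (tl a), alpha (hd a))}.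

(* Total space V = (+)_i k^{alpha_i}, indexed by pairs (i, p), p < alpha_i. *)
Definition vidx := {i : Q0 Q & 'I_(alpha i)}.
Definition totdim := #|{: vidx}|.

Definition mxe m n (A : 'M[F]_(m, n)) (r c : nat) : F :=
  match (insub r : option 'I_m), (insub c : option 'I_n) with
  | Some r', Some c' => A r' c'
  | _, _ => 0
  end.

Definition blockmx (a_t a_h : Q0 Q) (A : 'M[F]_(alpha a_t, alpha a_h)) : 'M[F]_totdim :=
  \matrix_(r, c)
    let x : vidx := enum_val r in let y : vidx := enum_val c in
    if (tag x == a_t) && (tag y == a_h) then mxe A (tagged x) (tagged y) else 0.

Definition arrmx (M : rep) (a : Q1 Q) : 'M[F]_totdim := blockmx (M a).

Definition vidmx (v : Q0 Q) : 'M[F]_totdim :=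
  \matrix_(r, c) (if (r == c) && (tag (enum_val r : vidx) == v) then 1 else 0).

(* Evaluation of a path a_1 a_2 ... a_n (h a_i = t a_{i+1}) : composite
   V_{t a_1} -> V_{h a_n}, as the product X_{a_1} ... X_{a_n}. *)
Definition evpath (A : Type) (f : A -> 'M[F]_totdim) (p : seq A) : 'M[F]_totdim :=
  foldr (fun a acc => f a *m acc) 1%:M p.

Definition linf (w : Q0 Q -> int) (g : Q0 Q -> nat) : int := \sum_i w i * (g i)%:Z.
Definition slope (sigma theta : Q0 Q -> int) (g : Q0 Q -> nat) : rat :=
  (linf sigma g)%:~R / (linf theta g)%:~R.

(* mu-semistability: for every subrepresentation L (subspaces U_i of k^{alpha_i},
   given as row spaces, with U_{ta} M_a <= U_{ha}), L <> 0 ->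
   mu(dim L) <= mu(alpha). *)
Definition semistable (sigma theta : Q0 Q -> int) (M : rep) : bool :=
  [forall U : {dffun forall i : Q0 Q, 'M[F]_(alpha i)},
     ([forall a : Q1 Q, (U (tl a) *m M a <= U (hd a))%MS]
      && [exists i : Q0 Q, \rank (U i) != 0%N])
     ==> (slope sigma theta (fun i => \rank (U i)) <= slope sigma theta alpha)].

Definition rep_ss sigma theta : {set rep} := [set M : rep | semistable sigma theta M].

Definition dimRep : nat := \sum_(a : Q1 Q) alpha (tl a) * alpha (hd a).
End Reps.

Section QP.
Variable F : finFieldType.
Variable Q : quiver.

(* A potential: a finite formal linear combination sum_k c_k w_k of cycles. *)
Definition potential := seq (F * seq (Q1 Q)).

Definition is_cycle (w : seq (Q1 Q)) : bool :=
  if w is a0 :: w' then path (fun a b => hd a == tl b) a0 w' && (hd (last a0 w') == tl a0)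
  else false.

Definition is_potential (W : potential) : bool := all (fun cw => is_cycle cw.2) W.

Definition coefW (W : potential) (w : seq (Q1 Q)) : F :=
  \sum_(cw <- W | cw.2 == w) cw.1.

(* C is a cut: W homogeneous of degree 1 for the grading deg a = [a \in C]. *)
Definition is_cut (C : {set Q1 Q}) (W : potential) : Prop :=
  forall w : seq (Q1 Q), coefW W w != 0 -> count (mem C) w = 1%N.

Definition omega (alpha : Q0 Q -> nat) (W : potential) (M : @rep F Q alpha) : F :=
  \sum_(cw <- W) cw.1 * \tr (evpath (arrmx M) cw.2).

(* cyclic derivative: d_c (a_0 ... a_{n-1}) = sum_{i : a_i = c} a_{i+1} ... a_{n-1} a_0 ... a_{i-1} *)
Definition cder (W : potential) (c : Q1 Q) : potential :=
  flatten [seq [seq (cw.1, behead (rot i cw.2)) | i <- iota 0 (size cw.2) & nth c cw.2 i == c]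
          | cw <- W].

Definition forget (C : {set Q1 Q}) (alpha : Q0 Q -> nat) (M : @rep F Q alpha)
  : @rep F (cutQ C) alpha :=
  [ffun a : Q1 (cutQ C) => M (val a)].

(* arrow matrices of a Q_C-representation, seen on arrows of Q (zero on C) *)
Definition cutarrmx (C : {set Q1 Q}) (alpha : Q0 Q -> nat) (x : @rep F (cutQ C) alpha) (a : Q1 Q)
  : 'M[F]_(totdim alpha) :=
  match (insub a : option {b : Q1 Q | b \notin C}) with
  | Some a' => arrmx x a'
  | None => 0
  end.

(* x in Rep_alpha(J(Q,W;C)) : x satisfies (d_c W)(x) = 0 for all c in C *)
Definition relJ (C : {set Q1 Q}) (W : potential) (alpha : Q0 Q -> nat) (x : @rep F (cutQ C) alpha) : bool :=
  [forall c in C,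
     @vidmx F Q alpha (hd c) *m (\sum_(cw <- cder W c) cw.1 *: evpath (cutarrmx x) cw.2) == 0].

Definition repJ_ss (C : {set Q1 Q}) (W : potential) (alpha : Q0 Q -> nat) (sigma theta : Q0 Q -> int)
  : {set @rep F (cutQ C) alpha} :=
  [set x : @rep F (cutQ C) alpha | @semistable F (cutQ C) alpha sigma theta x && @relJ C W alpha x].

Definition slope_fun (theta : Q0 Q -> int) : Prop :=
  forall g : Q0 Q -> nat, (exists i, g i != 0%N) -> 0 < linf theta g.

Definition numb (C : {set Q1 Q}) (alpha : Q0 Q -> nat) (sigma theta : Q0 Q -> int) : Prop :=
  forall M : @rep F Q alpha, semistable sigma theta M = @semistable F (cutQ C) alpha sigma theta (forget C M).

Definition phi_count (alpha : Q0 Q -> nat) (W : potential) (X : {set @rep F Q alpha}) : int :=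
  (#|[set M in X | omega W M == 0]|%:Z - #|[set M in X | omega W M == 1]|%:Z)%R.

Definition eulQ (a b : Q0 Q -> nat) : int :=
  (\sum_i (a i * b i)%:Z - \sum_(x : Q1 Q) (a (tl x) * b (hd x))%:Z)%R.
Definition eulC (C : {set Q1 Q}) (a b : Q0 Q -> nat) : nat :=
  \sum_(c in C) a (tl c) * b (hd c).
Definition eulJ (C : {set Q1 Q}) (a b : Q0 Q -> nat) : int :=
  (eulQ a b + (eulC C a b)%:Z + (eulC C b a)%:Z)%R.

Definition GLcard (alpha : Q0 Q -> nat) : nat :=
  \prod_(i : Q0 Q) #|[set A : 'M[F]_(alpha i) | A \in unitmx]|.
Definition dimGL (alpha : Q0 Q -> nat) : nat := \sum_(i : Q0 Q) alpha i ^ 2.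

(* virtual counts, in a real closed field R, with q^{1/2} = Num.sqrt q *)
Definition phi_vir (R : rcfType) (alpha : Q0 Q -> nat) (W : potential) (X : {set @rep F Q alpha}) : R :=
  Num.sqrt (#|F|%:R : R) ^ (- (dimRep alpha)%:Z) * (phi_count W X)%:~R.
Definition GL_vir (R : rcfType) (alpha : Q0 Q -> nat) : R :=
  Num.sqrt (#|F|%:R : R) ^ (- (dimGL alpha)%:Z) * (GLcard alpha)%:R.
End QP.

(* Main.v *)
Require Import Defs.
From HB Require Import structures.
From mathcomp Require Import all_boot all_order all_algebra.
From mathcomp Require Import ring.
Import Order.TTheory GRing.Theory Num.Theory.
Local Open Scope ring_scope.

Module Helpers.
Set Implicit Arguments. Unset Strict Implicit. Unset Printing Implicit Defensive.


Section Mx.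
Variable F : finFieldType.
Variable Q : quiver.
Variable alpha : Q0 Q -> nat.
Local Notation N := (totdim alpha).
Local Notation vx := (vidx alpha).

Lemma mul_vid_r (M : 'M[F]_N) v i j :
  (M *m vidmx F alpha v) i j = if tag (enum_val j : vx) == v then M i j else 0.
Proof.
rewrite mxE (bigD1 j) //= mxE eqxx /= big1 ?addr0.
  by case: ifP => _; rewrite ?mulr1 ?mulr0.
by move=> k /negbTE kj; rewrite mxE kj mulr0.
Qed.

Lemma mul_vid_l (M : 'M[F]_N) v i j :
  (vidmx F alpha v *m M) i j = if tag (enum_val i : vx) == v then M i j else 0.
Proof.
rewrite mxE (bigD1 i) //= mxE eqxx /= big1 ?addr0.
  by case: ifP => _; rewrite ?mul1r ?mul0r.
by move=> k /negbTE kj; rewrite mxE eq_sym kj mul0r.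
Qed.

Lemma vid_idem v : vidmx F alpha v *m vidmx F alpha v = vidmx F alpha v.
Proof.
apply/matrixP=> i j; rewrite mul_vid_r [in RHS]mxE.
case: eqP => [_|hv]; rewrite ?mxE //; case: eqP => [->|] //=; case: eqP => // h.
Qed.

Lemma block_vid t0 ah (A : 'M[F]_(alpha t0, alpha ah)) :
  blockmx A *m vidmx F alpha ah = blockmx A.
Proof.
apply/matrixP=> i j; rewrite mul_vid_r; case: ifP => // h.
by rewrite mxE /= h andbF.
Qed.

Lemma vid_block t0 ah (A : 'M[F]_(alpha t0, alpha ah)) :
  vidmx F alpha t0 *m blockmx A = blockmx A.
Proof.
apply/matrixP=> i j; rewrite mul_vid_l; case: ifP => // h.
by rewrite mxE /= h.
Qed.

Lemma mxeD m n (A B : 'M[F]_(m, n)) r c : mxe (A + B) r c = mxe A r c + mxe B r c.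
Proof. rewrite /mxe; case: (insub r : option 'I_m) => [r'|]; case: (insub c : option 'I_n) => [c'|] //=; by rewrite ?mxE ?addr0. Qed.
Lemma mxeZ m n (a : F) (A : 'M[F]_(m, n)) r c : mxe (a *: A) r c = a * mxe A r c.
Proof. rewrite /mxe; case: (insub r : option 'I_m) => [r'|]; case: (insub c : option 'I_n) => [c'|] //=; by rewrite ?mxE ?mulr0. Qed.

Lemma blockD t0 ah (A B : 'M[F]_(alpha t0, alpha ah)) :
  blockmx (A + B) = blockmx A + blockmx B.
Proof. by apply/matrixP=> i j; rewrite !mxE /=; case: ifP => _; rewrite ?mxeD ?addr0. Qed.
Lemma blockZ t0 ah (a : F) (A : 'M[F]_(alpha t0, alpha ah)) :
  blockmx (a *: A) = a *: blockmx A.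
Proof. by apply/matrixP=> i j; rewrite !mxE /=; case: ifP => _; rewrite ?mxeZ ?mulr0. Qed.

Lemma evpath_cat (T : Type) (f : T -> 'M[F]_N) l1 l2 :
  evpath f (l1 ++ l2) = evpath f l1 *m evpath f l2.
Proof. by elim: l1 => [|a l IH] /=; rewrite ?mul1mx // IH mulmxA. Qed.

Lemma tr_evpath_rot (T : Type) (f : T -> 'M[F]_N) i l :
  \tr (evpath f (rot i l)) = \tr (evpath f l).
Proof.
by rewrite /rot evpath_cat mxtrace_mulC -evpath_cat cat_take_drop.
Qed.
End Mx.


Section Comb.
Variable F : finFieldType.
Variable Q : quiver.
Variable C : {set Q1 Q}.
Variable alpha : Q0 Q -> nat.

Definition CS := {c : Q1 Q | c \in C}.
Definition Ytype := {dffun forall c : CS, 'M[F]_(alpha (tl (val c)), alpha (hd (val c)))}.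
Definition crep := @rep F (cutQ C) alpha.

Definition cpick (x : crep) (y : Ytype) (a : Q1 Q) : 'M[F]_(alpha (tl a), alpha (hd a)) :=
  (if a \in C as b return ((a \in C) = b -> 'M[F]_(alpha (tl a), alpha (hd a)))
   then fun h => y (exist _ a h) else fun h => x (exist _ a (negbT h))) (erefl (a \in C)).

Lemma cpickC x y a (h : a \in C) : cpick x y a = y (exist _ a h).
Proof.
rewrite /cpick; move: (erefl (a \in C)); case: {2 3}(a \in C) => e.
  by rewrite (bool_irrelevance e h).
by exfalso; move: h; rewrite e.
Qed.

Lemma cpickN x y a (h : a \notin C) : cpick x y a = x (exist _ a h).
Proof.
rewrite /cpick; move: (erefl (a \in C)); case: {2 3}(a \in C) => e.
  by exfalso; move: h; rewrite e.
by rewrite (bool_irrelevance (negbT e) h).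
Qed.

Definition combine (x : crep) (y : Ytype) : rep F alpha := [ffun a : Q1 Q => cpick x y a].
Definition restr (M : rep F alpha) : Ytype := [ffun c : CS => M (val c)].

Lemma forget_combine x y : forget C (combine x y) = x.
Proof.
apply/ffunP => -[a h]; rewrite !ffunE /=.
by rewrite (cpickN x y h).
Qed.

Lemma restr_combine x y : restr (combine x y) = y.
Proof.
apply/ffunP => -[a h]; rewrite !ffunE /=.
by rewrite (cpickC x y h).
Qed.

Lemma combine_split M : combine (forget C M) (restr M) = M.
Proof.
apply/ffunP => a; rewrite ffunE.
case: (boolP (a \in C)) => h.
  by rewrite (cpickC _ _ h) ffunE.
by rewrite (cpickN _ _ h) ffunE.
Qed.
End Comb.



Lemma group_zero (F : finFieldType) (Q : quiver) (W : potential F Q) (f : seq (Q1 Q) -> F) :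
  (forall w, coefW W w != 0 -> f w = 0) -> \sum_(cw <- W) cw.1 * f cw.2 = 0.
Proof.
move: {2}(size W) (leqnn (size W)) => n; elim: n W => [|n IH] W.
  by rewrite leqn0 => /nilP -> _; rewrite big_nil.
case: W => [|cw0 W'] szW hf; first by rewrite big_nil.
set W := cw0 :: W'.
rewrite (bigID (fun cw => cw.2 == cw0.2)) /=.
have -> : \sum_(cw <- W | cw.2 == cw0.2) cw.1 * f cw.2 = coefW W cw0.2 * f cw0.2.
  by rewrite /coefW big_distrl /=; apply: eq_bigr => cw /eqP ->.
have -> : coefW W cw0.2 * f cw0.2 = 0.
  by case: (eqVneq (coefW W cw0.2) 0) => [->|/hf ->]; rewrite ?mul0r ?mulr0.
rewrite add0r -big_filter; apply: IH.
  rewrite /= eqxx /= size_filter; apply: (leq_trans (count_size _ W')); exact: szW.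
move=> w; case: (eqVneq w cw0.2) => [->|ne].
  by rewrite /coefW big_filter_cond big_pred0 ?eqxx // => cw; rewrite andNb.
rewrite /coefW big_filter_cond.
rewrite (eq_bigl (fun cw => cw.2 == w)) => [/hf //|cw].
by case: eqP => // ->; rewrite eq_sym (negbTE ne).
Qed.

Lemma count_nth_sum (T : Type) (a : pred T) (x0 : T) (w : seq T) :
  count a w = (\sum_(i <- iota 0 (size w)) a (nth x0 w i))%N.
Proof.
rewrite -{1}(mkseq_nth x0 w) /mkseq count_map -sum1_count big_mkcond /=.
by apply: eq_bigr => i _; case: (a _).
Qed.

Lemma rot_nth (T : Type) (x0 : T) (w : seq T) i :
  (i < size w)%N -> rot i w = nth x0 w i :: behead (rot i w).
Proof. by move=> hi; rewrite /rot (drop_nth x0 hi). Qed.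

Section Omega.
Variable F : finFieldType.
Variable Q : quiver.
Variable C : {set Q1 Q}.
Variable W : potential F Q.
Variable alpha : Q0 Q -> nat.

Definition Zc (x : crep F C alpha) (c : Q1 Q) : 'M[F]_(totdim alpha) :=
  \sum_(cw <- cder W c) cw.1 *: evpath (cutarrmx x) cw.2.

Definition Gf (x : crep F C alpha) (y : Ytype F C alpha) : F :=
  \sum_(c : CS C) \tr (@blockmx F Q alpha _ _ (y c) *m Zc x (val c)).

Variables (x : crep F C alpha) (y : Ytype F C alpha).
Local Notation M := (combine x y).

Lemma cut_notin a : a \notin C -> cutarrmx x a = arrmx M a.
Proof.
move=> h; rewrite /cutarrmx; case: insubP => [[a0 h0] _ /= ea|]; last by rewrite h.
subst a0; rewrite /arrmx ffunE (cpickN x y h0) //.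
Qed.

Lemma cut_in a : a \in C -> cutarrmx x a = 0.
Proof. by move=> h; rewrite /cutarrmx insubN // h. Qed.

Lemma ev_notin l : all (fun a => a \notin C) l -> evpath (cutarrmx x) l = evpath (arrmx M) l.
Proof.
elim: l => [|a l IH] //= /andP[ha hl].
by rewrite IH // cut_notin.
Qed.

Lemma blocky (c : CS C) : @blockmx F Q alpha _ _ (y c) = arrmx M (val c).
Proof. by case: c => a h; rewrite /arrmx ffunE (cpickC x y h). Qed.

Definition Hs (w : seq (Q1 Q)) : F :=
  \sum_(c : CS C) \sum_(i <- iota 0 (size w) | nth (val c) w i == val c)
     \tr (arrmx M (val c) *m evpath (cutarrmx x) (behead (rot i w))).

Lemma Hs_count1 w : count (mem C) w = 1%N -> Hs w = \tr (evpath (arrmx M) w).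
Proof.
move=> hc; have [a0 _] : exists a0 : Q1 Q, True by case: w hc => [//|a ?]; exists a.
rewrite /Hs.
pose T a i := \tr (arrmx M a *m evpath (cutarrmx x) (behead (rot i w))).
rewrite -(big_sub (mem C) (fun a => \sum_(i <- iota 0 (size w) | nth a w i == a) T a i)) /=.
under eq_bigr => a _ do rewrite big_mkcond /=.
rewrite exchange_big /= big_seq.
under eq_bigr => i hi.
  have hi' : (i < size w)%N by move: hi; rewrite mem_iota.
  rewrite (eq_bigr (fun a => if nth a0 w i == a then T a i else 0)); last first.
    by move=> a _; rewrite (set_nth_default a0 a hi').
  rewrite -big_mkcondr /=.
  have -> : \sum_(a in C | nth a0 w i == a) T a i =
            if nth a0 w i \in C then T (nth a0 w i) i else 0.
    case: ifP => hC.
      rewrite (big_pred1 (nth a0 w i)) // => a /=.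
      by apply/andP/eqP => [[_ /eqP ->]|->] //; rewrite hC eqxx.
    by rewrite big_pred0 // => a; case: eqP => [<-|]; rewrite ?hC ?andbF.
  over.
rewrite -big_seq.
have hhas : has (mem C) w by rewrite has_count hc.
set i0 := find (mem C) w.
have hi0 : (i0 < size w)%N by rewrite -has_find.
have hC0 : nth a0 w i0 \in C by exact: (nth_find a0 hhas).
have uniq_i : forall i, i \in iota 0 (size w) -> i != i0 -> nth a0 w i \notin C.
  move=> i hi ne; apply/negP => hCi.
  move: hc; rewrite (count_nth_sum _ a0) (bigD1_seq i0) ?mem_iota ?iota_uniq //=.
  rewrite -big_filter (bigD1_seq i) ?filter_uniq ?iota_uniq //=; last by rewrite mem_filter ne.
  by move=> /eqP; rewrite hC0 hCi /= add1n eqSS.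
rewrite (bigD1_seq i0) ?mem_iota ?iota_uniq //= hC0 big1_seq ?addr0; last first.
  by move=> i /andP[ne hi]; rewrite (negbTE (uniq_i i hi ne)).
rewrite /T.
have hc' : count (mem C) (rot i0 w) = 1%N by rewrite /rot count_cat addnC -count_cat cat_take_drop.
rewrite (rot_nth a0 hi0) /= hC0 add1n in hc'.
case: hc' => /eqP; rewrite -leqn0 leqNgt -has_count -all_predC => hall.
rewrite ev_notin; last by apply: sub_all hall => b.
have -> : arrmx M (nth a0 w i0) *m evpath (arrmx M) (behead (rot i0 w))
  = evpath (arrmx M) (rot i0 w) by rewrite {2}(rot_nth a0 hi0).
by rewrite tr_evpath_rot.
Qed.

Lemma tr_sum (I : Type) (r : seq I) (P : pred I) (f : I -> 'M[F]_(totdim alpha)) :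
  \tr (\sum_(i <- r | P i) f i) = \sum_(i <- r | P i) \tr (f i).
Proof. exact: (big_morph _ (@mxtraceD _ _) (mxtrace0 _ _)). Qed.

Lemma Gf_Hs : Gf x y = \sum_(cw <- W) cw.1 * Hs cw.2.
Proof.
rewrite /Gf.
under eq_bigr => c _ do
  rewrite blocky /Zc mulmx_sumr tr_sum /cder big_flatten /= big_map.
rewrite exchange_big /=; apply: eq_bigr => cw _.
rewrite /Hs mulr_sumr; apply: eq_bigr => c _.
rewrite big_map big_filter mulr_sumr; apply: eq_bigr => i _.
by rewrite -scalemxAr mxtraceZ.
Qed.

Lemma omega_combine : is_cut C W -> omega W M = Gf x y.
Proof.
move=> hcut; apply/eqP; rewrite Gf_Hs -subr_eq0 /omega -sumrB.
under eq_bigr do rewrite -mulrBr.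
apply/eqP; apply: (@group_zero F Q W (fun w => \tr (evpath (arrmx M) w) - Hs w)) => w /hcut /Hs_count1 ->.
by rewrite subrr.
Qed.
End Omega.


Section Supp.
Variable F : finFieldType.
Variable Q : quiver.
Variable C : {set Q1 Q}.
Variable W : potential F Q.
Variable alpha : Q0 Q -> nat.
Variable x : crep F C alpha.

Lemma cut_vid b : cutarrmx x b *m vidmx F alpha (hd b) = cutarrmx x b.
Proof.
rewrite /cutarrmx; case: insubP => [b' _ eb|_]; last by rewrite mul0mx.
rewrite /arrmx -eb; exact: block_vid.
Qed.

Lemma ev_last b p : evpath (cutarrmx x) (b :: p) *m vidmx F alpha (hd (last b p))
  = evpath (cutarrmx x) (b :: p).
Proof.
elim: p b => [|b' p IH] b /=; first by rewrite mulmx1 cut_vid.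
by rewrite -mulmxA; have /= -> := IH b'.
Qed.

Definition erel (a b : Q1 Q) := hd a == tl b.

Lemma is_cycleE w : is_cycle w = (w != [::]) && cycle erel w.
Proof. by case: w => [//|a w] /=; rewrite rcons_path. Qed.

Lemma term_supp c w i : is_cycle w -> (i < size w)%N -> nth c w i == c ->
  vidmx F alpha (hd c) *m evpath (cutarrmx x) (behead (rot i w)) *m vidmx F alpha (tl c)
  = vidmx F alpha (hd c) *m evpath (cutarrmx x) (behead (rot i w)).
Proof.
move=> hcy hi /eqP hc.
have hcy' : cycle erel w by move: hcy; rewrite is_cycleE => /andP[].
have := hcy'; rewrite -(rot_cycle i) (rot_nth c hi) hc.
move: (behead (rot i w)) => p /=; rewrite rcons_path => /andP[_ /eqP hl].
case: p hl => [|b p] /= hl.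
  by rewrite mulmx1 hl vid_idem.
by rewrite -mulmxA -hl ev_last.
Qed.
Lemma Zc_supp c : is_potential W ->
  vidmx F alpha (hd c) *m Zc W x c *m vidmx F alpha (tl c) = vidmx F alpha (hd c) *m Zc W x c.
Proof.
move=> hW; rewrite /Zc !mulmx_sumr mulmx_suml big_seq [RHS]big_seq.
apply: eq_bigr => cw /flattenP[s /mapP[[a w] haw ->] /mapP[i]].
rewrite mem_filter mem_iota /= add0n => /andP[hn hi] ->.
have hcy : is_cycle w by exact: (allP hW _ haw).
by rewrite /= -!scalemxAr -scalemxAl term_supp.
Qed.
End Supp.

Section Func.
Variable F : finFieldType.
Variable Q : quiver.
Variable alpha : Q0 Q -> nat.
Local Notation N := (totdim alpha).
Local Notation vx := (vidx alpha).

Lemma vidx_eq (u v : vx) : (u == v) = (tag u == tag v) && ((tagged u : nat) == tagged v).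
Proof.
case: u => i p; case: v => j q /=.
case: (eqVneq i j) => [e|ne] /=.
  subst j; apply/eqP/eqP => [/eqP|e]; first by rewrite eq_Tagged => /eqP /= ->.
  by apply/eqP; rewrite eq_Tagged; apply/eqP; apply: val_inj.
apply/negbTE; apply: contra ne => /eq_tag /= ->; exact: eqxx.
Qed.

Lemma mxeE m n (A : 'M[F]_(m, n)) a b (ha : (a < m)%N) (hb : (b < n)%N) :
  mxe A a b = A (Ordinal ha) (Ordinal hb).
Proof. by rewrite /mxe (insubT (fun i => i < m)%N ha) (insubT (fun i => i < n)%N hb). Qed.

Definition Ydelta (t h : Q0 Q) (s r : 'I_N) : 'M[F]_(alpha t, alpha h) :=
  \matrix_(i, j) (((i : nat) == (tagged (enum_val r : vx) : nat))
                  && ((j : nat) == (tagged (enum_val s : vx) : nat)))%:R.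

Lemma block_delta t h s r j k :
  tag (enum_val s : vx) = h -> tag (enum_val r : vx) = t ->
  blockmx (Ydelta t h s r) j k = ((j == r) && (k == s))%:R.
Proof.
move=> hs hr; rewrite mxE /=.
case: (eqVneq (tag (enum_val j : vx)) t) => tj; last first.
  have : j != r by apply: contra tj => /eqP ->; rewrite hr.
  by move/negbTE => ->.
case: (eqVneq (tag (enum_val k : vx)) h) => tk; last first.
  have : k != s by apply: contra tk => /eqP ->; rewrite hs.
  by move/negbTE => ->; rewrite ?andbF.
have ha : ((tagged (enum_val j : vx) : nat) < alpha t)%N by rewrite -tj ltn_ord.
have hb : ((tagged (enum_val k : vx) : nat) < alpha h)%N by rewrite -tk ltn_ord.
rewrite (mxeE _ ha hb) mxE /=.
rewrite -(inj_eq enum_val_inj) -[k == s](inj_eq enum_val_inj) !vidx_eq.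
have -> : tag (enum_val j : vx) == tag (enum_val r : vx) by rewrite tj hr.
have -> : tag (enum_val k : vx) == tag (enum_val s : vx) by rewrite tk hs.
by [].
Qed.

Lemma tr_delta t h s r (K : 'M[F]_N) :
  tag (enum_val s : vx) = h -> tag (enum_val r : vx) = t ->
  \tr (blockmx (Ydelta t h s r) *m K) = K s r.
Proof.
move=> hs hr; rewrite /mxtrace (bigD1 r) //= big1 ?addr0.
  rewrite mxE (bigD1 s) //= big1 ?addr0.
    by rewrite block_delta // !eqxx mul1r.
  by move=> k hk; rewrite block_delta // eqxx (negbTE hk) mul0r.
move=> j hj; rewrite mxE big1 // => k _.
by rewrite block_delta // (negbTE hj) mul0r.
Qed.
End Func.

Section Rel.
Variable F : finFieldType.
Variable Q : quiver.
Variable C : {set Q1 Q}.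
Variable W : potential F Q.
Variable alpha : Q0 Q -> nat.
Variable x : crep F C alpha.

Lemma relJ_Gf : @relJ F Q C W alpha x -> forall y, Gf W x y = 0.
Proof.
move/forallP=> h y; rewrite /Gf big1 // => -[c hc] _ /=.
have := h c; rewrite hc /= => /eqP hK.
change (vidmx F alpha (hd c) *m Zc W x c = 0) in hK.
by rewrite -(block_vid (y (exist _ c hc))) -mulmxA hK mulmx0 mxtrace0.
Qed.

Lemma notrelJ : is_potential W -> ~~ @relJ F Q C W alpha x ->
  exists c0 : CS C, exists Y0 : 'M[F]_(alpha (tl (val c0)), alpha (hd (val c0))),
    \tr (@blockmx F Q alpha _ _ Y0 *m Zc W x (val c0)) != 0.
Proof.
move=> hW; rewrite /relJ negb_forall => /existsP[c]; rewrite negb_imply => /andP[hc hK].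
change (is_true (vidmx F alpha (hd c) *m Zc W x c != 0)) in hK.
set K := vidmx F alpha (hd c) *m Zc W x c in hK.
have : ~~ [forall s, forall r, K s r == 0].
  apply: contra hK => /forallP h; apply/eqP/matrixP => s r.
  by move/forallP: (h s) => /(_ r) /eqP ->; rewrite mxE.
rewrite negb_forall => /existsP[s]; rewrite negb_forall => /existsP[r hsr].
have hs : tag (enum_val s : vidx alpha) = hd c.
  apply/eqP; apply: contraNT hsr => ne; rewrite /K mul_vid_l (negbTE ne) //.
have hr : tag (enum_val r : vidx alpha) = tl c.
  apply/eqP; apply: contraNT hsr => ne.
  by rewrite /K -(@Zc_supp _ _ _ _ _ x c hW) mul_vid_r (negbTE ne).
exists (exist _ c hc); exists (@Ydelta F Q alpha (tl c) (hd c) s r) => /=.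
by rewrite -(block_vid (@Ydelta F Q alpha (tl c) (hd c) s r)) -mulmxA -/K tr_delta.
Qed.
End Rel.


Lemma fold_prod (aT : finType) (f : aT -> nat) :
  foldr muln 1%N [seq f x | x : aT] = (\prod_(x : aT) f x)%N.
Proof. by rewrite foldr_map -big_enum unlock /reducebig. Qed.

Section Count.
Variable F : finFieldType.
Variable Q : quiver.
Variable C : {set Q1 Q}.
Variable W : potential F Q.
Variable alpha : Q0 Q -> nat.
Variable x : crep F C alpha.

Lemma card_Ytype : #|{: Ytype F C alpha}| = (#|F| ^ eulC C alpha alpha)%N.
Proof.
rewrite card_dep_ffun fold_prod /eulC expn_sum.
rewrite (big_sub (mem C) (fun c => #|F| ^ (alpha (tl c) * alpha (hd c))))%N /=.
by apply: eq_bigr => c _; rewrite card_mx.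
Qed.

Definition Nk (k : F) : nat := #|[set y : Ytype F C alpha | Gf W x y == k]|.

Lemma count_fiber : is_potential W ->
  ((Nk 0)%:Z - (Nk 1)%:Z = if @relJ F Q C W alpha x then (#|F| ^ eulC C alpha alpha)%N%:Z else 0)%R.
Proof.
move=> hW; case: ifP => hJ.
  have h0 : [set y : Ytype F C alpha | Gf W x y == 0] = setT.
    by apply/setP => y; rewrite !inE relJ_Gf ?eqxx.
  have h1 : [set y : Ytype F C alpha | Gf W x y == 1] = set0.
    by apply/setP => y; rewrite !inE relJ_Gf // eq_sym oner_eq0.
  by rewrite /Nk h0 h1 cards0 cardsT card_Ytype subr0.
have [c0 [Y0 ht]] := notrelJ hW (negbT hJ).
set t := \tr (_ *m _) in ht.
pose T (c : CS C) := 'M[F]_(alpha (tl (val c)), alpha (hd (val c))).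
pose sh (y : Ytype F C alpha) : Ytype F C alpha :=
  [ffun c : CS C => @dfwith _ T (fun c => y c) c0 (y c0 + t^-1 *: Y0) c].
have hsh : forall y, Gf W x (sh y) = Gf W x y + 1.
  move=> y; rewrite /Gf (bigD1 c0) //= [in RHS](bigD1 c0) //= -addrA [_ + 1]addrC addrA.
  congr (_ + _).
    rewrite ffunE dfwith_in blockD blockZ mulmxDl mxtraceD -scalemxAl mxtraceZ.
    by rewrite -/t mulVf.
  apply: eq_bigr => c hc; rewrite ffunE dfwith_out //; by rewrite eq_sym.
have inj_sh : injective sh.
  move=> y1 y2 e; apply/ffunP => c.
  have := congr1 (fun f : Ytype F C alpha => f c) e; rewrite /sh /= !ffunE.
  case: (eqVneq c0 c) => [<-|ne]; last by rewrite !dfwith_out.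
  by rewrite !dfwith_in => /addIr.
suff -> : Nk 1 = Nk 0 by rewrite subrr.
rewrite /Nk -(card_preimset [set y | Gf W x y == 1] inj_sh).
apply: eq_card => y; rewrite !inE hsh.
by rewrite -{2}(add0r 1) (inj_eq (@addIr _ 1)).
Qed.
End Count.


Lemma card_sum (T : finType) (P : pred T) : #|[set p | P p]| = (\sum_p (P p : nat))%N.
Proof. by rewrite -sum1_card big_mkcond; apply: eq_bigr => p _; rewrite inE; case: (P p). Qed.

Lemma Posz_sum (I : Type) (r : seq I) (P : pred I) (f : I -> nat) :
  Posz (\sum_(i <- r | P i) f i)%N = \sum_(i <- r | P i) Posz (f i).
Proof. exact: (big_morph _ PoszD erefl). Qed.

Section Main.
Variable F : finFieldType.
Variable Q : quiver.
Variable C : {set Q1 Q}.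
Variable alpha : Q0 Q -> nat.

Lemma card_split (P : pred (rep F alpha)) :
  #|[set M | P M]| = (\sum_(x : crep F C alpha) #|[set y : Ytype F C alpha | P (combine x y)]|)%N.
Proof.
rewrite card_sum.
rewrite (reindex (fun p : crep F C alpha * Ytype F C alpha => combine p.1 p.2)) /=; last first.
  exists (fun M : rep F alpha => (forget C M, restr C M)) => [[x y] _|M _] /=.
    by rewrite forget_combine restr_combine.
  exact: combine_split.
rewrite -(pair_bigA _ (fun (x : crep F C alpha) (y : Ytype F C alpha) => (P (combine x y) : nat))) /=.
by apply: eq_bigr => x _; rewrite card_sum.
Qed.
Variable W : potential F Q.
Variables sigma theta : Q0 Q -> int.

Lemma part1 : is_potential W -> is_cut C W -> numb F C alpha sigma theta ->
  phi_count W (rep_ss F alpha sigma theta)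
    = ((#|F| ^ eulC C alpha alpha * #|repJ_ss C W alpha sigma theta|)%N)%:Z.
Proof.
move=> hW hcut hnumb.
have key k : #|[set M in rep_ss F alpha sigma theta | omega W M == k]|
   = (\sum_(x : crep F C alpha)
        (if @semistable F (cutQ C) alpha sigma theta x then Nk W x k else 0))%N.
  rewrite card_split; apply: eq_bigr => x _.
  case: ifP => hss.
    rewrite /Nk; apply: eq_card => y; rewrite !inE hnumb forget_combine hss.
    by rewrite omega_combine.
  apply/eqP; rewrite cards_eq0; apply/eqP/setP => y.
  by rewrite !inE hnumb forget_combine hss.
rewrite /phi_count !key !Posz_sum -sumrB.
rewrite card_sum PoszM Posz_sum mulr_sumr; apply: eq_bigr => x _.
case: ifP => hss /=; last by rewrite subr0 mulr0.
rewrite count_fiber //; case: ifP => _; by rewrite ?mulr1 ?mulr0.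
Qed.
End Main.


Lemma part2_alg (R : rcfType) (phi : int) (J G e dR dG q : nat) :
  (0 < q)%N -> (0 < G)%N -> phi = (q ^ e * J)%N%:Z ->
  (Num.sqrt (q%:R : R) ^ (- dR%:Z) * phi%:~R) / (Num.sqrt (q%:R : R) ^ (- dG%:Z) * G%:R)
  = Num.sqrt (q%:R : R) ^ ((dG%:Z - dR%:Z) + e%:Z + e%:Z) * (J%:R / G%:R).
Proof.
move=> hq hG ->.
set s := Num.sqrt (q%:R : R).
have hs : s != 0 by rewrite sqrtr_eq0 -ltNge ltr0n.
have hG' : (G%:R : R) != 0 by rewrite pnatr_eq0 -lt0n.
rewrite !expfzDr // -!exprnN -!exprnP -pmulrn natrM natrX.
have -> : (q%:R : R) = s ^+ 2 by rewrite sqr_sqrtr // ler0n.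
rewrite -exprM mul2n -addnn exprD.
have hsn : forall n, s ^+ n != 0 by move=> n; rewrite expf_neq0.
field.
by rewrite hG' !hsn.
Qed.

End Helpers.
Import Helpers.

Theorem lemmaL (F : finFieldType) (Q : quiver) (W : potential F Q) (C : {set Q1 Q})
  (alpha : Q0 Q -> nat) (sigma theta : Q0 Q -> int) (R : rcfType) :
  is_potential W -> is_cut C W -> slope_fun theta -> numb F C alpha sigma theta ->
  phi_count W (rep_ss F alpha sigma theta)
    = ((#|F| ^ eulC C alpha alpha * #|repJ_ss C W alpha sigma theta|)%N)%:Z
  /\
  phi_vir R W (rep_ss F alpha sigma theta) / GL_vir F R alpha
    = Num.sqrt (#|F|%:R : R) ^ (eulJ C alpha alpha)
      * (#|repJ_ss C W alpha sigma theta|%:R / (GLcard F alpha)%:R).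
Proof.
move=> hW hcut _ hnumb.
have h1 := part1 hW hcut hnumb.
split => //.
have heul : eulJ C alpha alpha
   = ((dimGL alpha)%:Z - (dimRep alpha)%:Z) + (eulC C alpha alpha)%:Z + (eulC C alpha alpha)%:Z.
  rewrite /eulJ /eulQ /dimGL /dimRep !Posz_sum.
  by congr (_ - _ + _ + _); apply: eq_bigr => i _; rewrite mulnn.
rewrite heul /phi_vir /GL_vir; apply: part2_alg => //.
  by apply/card_gt0P; exists 0.
rewrite /GLcard prodn_gt0 // => i; apply/card_gt0P; exists 1%:M.
by rewrite inE unitmx1.
Qed.
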